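(* Let $\{e_1,\dots,e_n\}$ be a basis of the free abelian group $\mathbb Z^n$, and let $$\widetilde V=\{e_1,\dots,e_n\}\cup\{e_i-e_j:1\le i<j\le n\}.$$ For any $v,v_1,\dots,v_k\in\widetilde V$, if the subgroup of $\mathbb Z^n$ generated by $\{v_1,\dots,v_k\}$ contains some non-zero multiple of $v$, then it contains $v$. *)

(* Defs.v *)
From mathcomp Require Import all_boot all_order all_algebra.
Set Implicit Arguments. Unset Strict Implicit. Unset Printing Implicit Defensive.
Import Order.TTheory GRing.Theory Num.Theory.
Local Open Scope ring_scope.

(* A basis {e_1,...,e_n} of Z^n is given by the rows of a matrix E that is
   invertible over int (E \in unitmx, i.e. det E = +-1); e_i = row i E. *)

Definition Vtilde (n : nat) (E : 'M[int]_n) (v : 'rV[int]_n) : Prop :=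
  (exists i : 'I_n, v = row i E) \/
  (exists i j : 'I_n, (i < j)%N /\ v = row i E - row j E).

Definition in_subgroup (n k : nat) (vs : 'I_k -> 'rV[int]_n) (w : 'rV[int]_n) : Prop :=
  exists c : 'I_k -> int, w = \sum_(l < k) c l *: vs l.

(* Main.v *)
Require Import Defs.
From mathcomp Require Import all_boot all_order all_algebra.
Import Order.TTheory GRing.Theory Num.Theory.
Local Open Scope ring_scope.

Section Aux.
Variables (n : nat) (E : 'M[int]_n) (hE : E \in unitmx) (k : nat)
  (vs : 'I_k -> 'rV[int]_n).

Definition fv (p : option 'I_n) : 'rV[int]_n := if p is Some i then row i E else 0.
Definition edge : rel (option 'I_n) :=
  fun p q => [exists l, (vs l == fv p - fv q) || (vs l == fv q - fv p)].

Lemma in_sub0 : in_subgroup vs 0.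
Proof. exists (fun _ => 0); rewrite big1 // => l _; by rewrite scale0r. Qed.

Lemma in_subD x y : in_subgroup vs x -> in_subgroup vs y -> in_subgroup vs (x + y).
Proof.
move=> [c ->] [d ->]; exists (fun l => c l + d l); rewrite -big_split.
by apply: eq_bigr => l _; rewrite scalerDl.
Qed.

Lemma in_subN x : in_subgroup vs x -> in_subgroup vs (- x).
Proof.
move=> [c ->]; exists (fun l => - c l); rewrite -sumrN.
by apply: eq_bigr => l _; rewrite scaleNr.
Qed.

Lemma in_sub_gen l : in_subgroup vs (vs l).
Proof.
exists (fun l' => (l' == l)%:R); rewrite (bigD1 l) //= eqxx scale1r big1 ?addr0 //.
by move=> l' /negbTE ->; rewrite scale0r.
Qed.

Lemma edge_sub p q : edge p q -> in_subgroup vs (fv p - fv q).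
Proof.
case/existsP => l /orP [/eqP <-|/eqP h]; first exact: in_sub_gen.
rewrite -opprB -h; apply: in_subN; exact: in_sub_gen.
Qed.

Lemma connect_sub p q : connect edge p q -> in_subgroup vs (fv p - fv q).
Proof.
move/connectP=> [s]; elim: s p => [|r s IH] p /=.
  by move=> _ ->; rewrite subrr; apply: in_sub0.
case/andP=> epr pth lq.
have -> : fv p - fv q = (fv p - fv r) + (fv r - fv q) by rewrite addrA subrK.
apply: in_subD; [exact: edge_sub | exact: IH].
Qed.

Lemma edge_sym : symmetric edge.
Proof. by move=> p q; apply/existsP/existsP => [][l h]; exists l; rewrite orbC. Qed.

Lemma conn_eq a p q : edge p q -> connect edge a p = connect edge a q.
Proof.
move=> epq; apply/idP/idP => h; apply: (connect_trans h); apply: connect1 => //.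
by rewrite edge_sym.
Qed.

Definition gg a (p : option 'I_n) : int := (connect edge a p)%:R.
Definition WW a : 'cV[int]_n := \col_i (gg a (Some i) - gg a None).
Definition psi a (x : 'rV[int]_n) : int := (x *m (invmx E *m WW a)) 0 0.

Lemma psi_f a p : psi a (fv p) = gg a p - gg a None.
Proof.
case: p => [i|] /=; last by rewrite /psi mul0mx !mxE subrr.
rewrite /psi rowE !mulmxA -(mulmxA _ E) mulmxV // mulmx1 -rowE !mxE //.
Qed.

Lemma psiB a x y : psi a (x - y) = psi a x - psi a y.
Proof. by rewrite /psi mulmxBl !mxE. Qed.

Lemma psiZ a (m : int) x : psi a (m *: x) = m * psi a x.
Proof. by rewrite /psi -scalemxAl !mxE. Qed.

Lemma psi_sum a (c : 'I_k -> int) :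
  psi a (\sum_l c l *: vs l) = \sum_l c l * psi a (vs l).
Proof.
rewrite /psi mulmx_suml summxE; apply: eq_bigr => l _.
by rewrite -scalemxAl mxE.
Qed.

Lemma psi_edge a p q : edge p q -> psi a (fv p - fv q) = 0.
Proof. by move=> epq; rewrite psiB !psi_f /gg (@conn_eq a p q epq) subrr. Qed.

End Aux.
Arguments fv {n} E p.
Arguments edge {n} E {k} vs.
Arguments psi {n} E {k} vs a x.
Arguments gg {n} E {k} vs a p.
Arguments connect_sub {n} E {k} vs p q.
Arguments psi_sum {n} E {k} vs a c.
Arguments psiZ {n} E {k} vs a m x.
Arguments psiB {n} E {k} vs a x y.
Arguments psi_f {n} E hE {k} vs a p.
Arguments psi_edge {n} E hE {k} vs a p q.

Theorem propositionA1 (n : nat) (E : 'M[int]_n) (hE : E \in unitmx)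
  (k : nat) (v : 'rV[int]_n) (vs : 'I_k -> 'rV[int]_n)
  (hv : Vtilde E v) (hvs : forall l : 'I_k, Vtilde E (vs l))
  (hmul : exists m : int, m != 0 /\ in_subgroup vs (m *: v)) :
  in_subgroup vs v.
Proof.
have hf : forall w, Vtilde E w -> exists p q, w = fv E p - fv E q.
  move=> w [[i ->]|[i [j [_ ->]]]].
    by exists (Some i), None; rewrite /= subr0.
  by exists (Some i), (Some j).
have [p0 [q0 hv0]] := hf _ hv; rewrite hv0 in hmul *.
apply: (connect_sub E vs).
have [m [m0 [c hc]]] := hmul.
have : psi E vs p0 (m *: (fv E p0 - fv E q0)) = 0.
  rewrite hc psi_sum big1 // => l _.
  have [p [q hl]] := hf _ (hvs l).
  rewrite hl (psi_edge E hE) ?mulr0 //.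
  by apply/existsP; exists l; rewrite -hl eqxx.
rewrite psiZ psiB !(psi_f E hE) opprB addrA subrK /gg connect0.
move/eqP; rewrite mulf_eq0 (negbTE m0) /=.
by case: (connect _ p0 q0).
Qed.
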